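(* Assume the subgraph $\mathcal G_{\sigma(t)}$ is undirected for all $t\ge0$. Then for all $t\ge0$, every nonzero eigenvalue of $\mathcal H_{\sigma(t)}\in\mathbb{R}^{N\times N}$ is not less than $\lambda_H=\frac{4}{N(N^2-N+4)}$.
   Context: $\sigma:[0,\infty)\to\mathcal P=\{1,\dots,n_0\}$ is a piecewise constant switching signal. For each $p\in\mathcal P$, $\bar{\mathcal G}_p$ is a graph on nodes $\{0,1,\dots,N\}$ with edge set $\bar{\mathcal E}_p$ of ordered pairs $(j,i)$, $j\ne i$; $a_{ij}(t)=1$ if $(j,i)\in\bar{\mathcal E}_{\sigma(t)}$, else $0$. $\mathcal G_{\sigma(t)}$ is the subgraph on $\{1,\dots,N\}$ with the edges of $\bar{\mathcal E}_{\sigma(t)}$ among those nodes (undirected: $(i,j)$ edge iff $(j,i)$ edge), with Laplacian $\mathcal L_{\sigma(t)}$ ($l_{ii}=\sum_{j=1}^Na_{ij}(t)$, $l_{ij}=-a_{ij}(t)$, $i\ne j$). $\Delta_{\sigma(t)}=\mathrm{diag}(a_{10}(t),\dots,a_{N0}(t))$ and $\mathcal H_{\sigma(t)}=\mathcal L_{\sigma(t)}+\Delta_{\sigma(t)}$ (the leader-follower matrix). *)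

(* Defs.v *)
From HB Require Import structures.
From mathcomp Require Import all_boot all_order all_algebra.
From mathcomp Require Import reals.
Set Implicit Arguments. Unset Strict Implicit. Unset Printing Implicit Defensive.
Import Order.TTheory GRing.Theory Num.Theory.
Local Open Scope ring_scope.

(* Modes P = {1..n0} are represented by 'I_n0.  Nodes {0,1,..,N} are 'I_N.+1,
   node 0 (ord0) is the leader, follower i : 'I_N is node (lift ord0 i).
   E p : rel 'I_N.+1, with  E p j i  meaning  (j,i) \in \bar E_p. *)

Section Defs.
Variable R : realType.

Definition piecewise_constant (n0 : nat) (sigma : R -> 'I_n0) : Prop :=
  exists ts : nat -> R,
    [/\ ts 0%N = 0,
        (forall k, ts k < ts k.+1),
        (forall M : R, exists k, M < ts k) &
        (forall k t, ts k <= t -> t < ts k.+1 -> sigma t = sigma (ts k))].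

Variables (n0 N : nat) (E : 'I_n0 -> rel 'I_N.+1).

Definition adj (p : 'I_n0) (i j : 'I_N) : R := (E p (lift ord0 j) (lift ord0 i))%:R.

Definition adj0 (p : 'I_n0) (i : 'I_N) : R := (E p ord0 (lift ord0 i))%:R.

Definition lapl (p : 'I_n0) : 'M[R]_N :=
  \matrix_(i, j) (if i == j then \sum_(k < N) adj p i k else - adj p i j).

Definition Delta (p : 'I_n0) : 'M[R]_N :=
  \matrix_(i, j) (if i == j then adj0 p i else 0).

Definition Hmx (p : 'I_n0) : 'M[R]_N := lapl p + Delta p.

End Defs.

(* Main.v *)
Require Import Defs.
From HB Require Import structures.
From mathcomp Require Import all_boot all_order all_algebra.
From mathcomp Require Import reals.
From mathcomp Require Import ring lra zify.
Import Order.TTheory GRing.Theory Num.Theory.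
Local Open Scope ring_scope.

Definition clamp (R : realType) (a v : R) : R := Num.min (Num.max v 0) a.
Arguments clamp {R}.

Lemma clamp_lo {R : realType} (a v : R) : 0 <= a -> v <= 0 -> clamp a v = 0.
Proof. move=> ha hv; rewrite /clamp. rewrite (@max_r _ _ v 0) // min_l //. Qed.
Lemma clamp_mid {R : realType} (a v : R) : 0 <= v -> v <= a -> clamp a v = v.
Proof. move=> h0 h1; rewrite /clamp max_l // min_l //. Qed.
Lemma clamp_hi {R : realType} (a v : R) : 0 <= a -> a <= v -> clamp a v = a.
Proof. move=> h0 h1; rewrite /clamp max_l ?min_r //; exact: le_trans h1. Qed.

Lemma clamp_cases {R : realType} (a v : R) : 0 <= a ->
  [\/ v <= 0 /\ clamp a v = 0, (0 <= v /\ v <= a) /\ clamp a v = v | a <= v /\ clamp a v = a].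
Proof.
move=> ha; case: (lerP v 0) => hv; first by apply: Or31; rewrite clamp_lo.
case: (lerP v a) => hva; first by apply: Or32; rewrite clamp_mid // ltW.
by apply: Or33; rewrite clamp_hi // ltW.
Qed.

Lemma sqle {R : realType} (p q : R) :
  (0 <= p /\ p <= q) \/ (q <= p /\ p <= 0) -> p ^+ 2 <= q ^+ 2.
Proof. case=> [[h1 h2]|[h1 h2]]; nra. Qed.

Lemma sqle2 {R : realType} (p q g : R) :
  (0 <= p /\ p + g <= q) \/ (q <= p - g /\ p <= 0) -> 0 <= g -> p ^+ 2 + g ^+ 2 <= q ^+ 2.
Proof. case=> [[h1 h2]|[h1 h2]] hg; nra. Qed.

Lemma clamp_lip {R : realType} (a u v : R) : 0 <= a ->
  (clamp a u - clamp a v) ^+ 2 <= (u - v) ^+ 2.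
Proof.
move=> ha; case: (clamp_cases a u ha) => [[h1 ->]|[[h1 h1'] ->]|[h1 ->]];
case: (clamp_cases a v ha) => [[h2 ->]|[[h2 h2'] ->]|[h2 ->]]; apply: sqle; lra.
Qed.

Lemma clamp_pos3 {R : realType} (a b u : R) : 0 <= b -> b < a -> (u <= b \/ a <= u) ->
  [\/ clamp b u = 0 /\ clamp a u = 0 /\ u <= b,
       clamp b u = u /\ clamp a u = u /\ 0 <= u /\ u <= b |
       clamp b u = b /\ clamp a u = a /\ a <= u].
Proof.
move=> hb hba [hu|hu].
  case: (lerP u 0) => hu0.
    by apply: Or31; rewrite !clamp_lo //; lra.
  by apply: Or32; rewrite !clamp_mid //; lra.
by apply: Or33; rewrite !clamp_hi //; lra.
Qed.

Lemma clamp_step {R : realType} {a b u v : R} : 0 <= b -> b < a ->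
  (u <= b \/ a <= u) -> (v <= b \/ a <= v) ->
  (clamp b u - clamp b v) ^+ 2 <= (clamp a u - clamp a v) ^+ 2 /\
  (u <= b -> a <= v -> (clamp b u - clamp b v) ^+ 2 + (a - b) ^+ 2 <= (clamp a u - clamp a v) ^+ 2).
Proof.
move=> hb hba hu hv.
case: (clamp_pos3 a b u hb hba hu) => [[-> [-> h1]]|[-> [-> h1]]|[-> [-> h1]]];
case: (clamp_pos3 a b v hb hba hv) => [[-> [-> h2]]|[-> [-> h2]]|[-> [-> h2]]];
split; try move=> hx hy; try (apply: sqle; lra); try (apply: sqle2; lra); lra.
Qed.
Lemma sqrB_sym {R : realType} (x y : R) : (x - y) ^+ 2 = (y - x) ^+ 2.
Proof. by rewrite -sqrrN opprB. Qed.

Lemma sum_bump {R : realType} n (F G : 'I_n -> R) (a : 'I_n) (dl : R) :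
  (forall j, F j <= G j) -> F a + dl <= G a -> \sum_j F j + dl <= \sum_j G j.
Proof.
move=> hFG ha.
rewrite (bigD1 a) //= [X in _ <= X](bigD1 a) //=.
have : \sum_(j | j != a) F j <= \sum_(j | j != a) G j by apply: ler_sum => j _.
lra.
Qed.

Lemma sum_bump2 {R : realType} n (F G : 'I_n -> R) (a b : 'I_n) (dl : R) : a != b ->
  (forall j, F j <= G j) -> F a + dl <= G a -> F b + dl <= G b ->
  \sum_j F j + dl + dl <= \sum_j G j.
Proof.
move=> hab hFG ha hb.
rewrite (bigD1 a) //= [X in _ <= X](bigD1 a) //=.
rewrite (bigD1 b) //=; last by rewrite eq_sym.
rewrite [X in _ <= _ + X](bigD1 b) //=; last by rewrite eq_sym.
have : \sum_(j | (j != a) && (j != b)) F j <= \sum_(j | (j != a) && (j != b)) G j.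
  by apply: ler_sum => j _.
lra.
Qed.

Definition Qf {R : realType} {n} (A : 'I_n -> 'I_n -> R) (d : 'I_n -> R) (f : 'I_n -> R) : R :=
  (\sum_j \sum_k A j k * (f j - f k) ^+ 2) / 2 + \sum_j d j * (f j) ^+ 2.

Lemma Qf_ge0 {R : realType} n (A : 'I_n -> 'I_n -> R) d f :
  (forall j k, 0 <= A j k) -> (forall j, 0 <= d j) -> 0 <= Qf A d f.
Proof.
move=> hA hd; rewrite /Qf; apply: addr_ge0.
  apply: divr_ge0 => //; apply: sumr_ge0 => j _; apply: sumr_ge0 => k _.
  by apply: mulr_ge0 => //; apply: sqr_ge0.
by apply: sumr_ge0 => j _; apply: mulr_ge0 => //; apply: sqr_ge0.
Qed.

Lemma clamp0 {R : realType} (a : R) : 0 <= a -> clamp a 0 = 0.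
Proof. by move=> ha; rewrite clamp_lo. Qed.

Lemma Qf_clamp_le {R : realType} n (A : 'I_n -> 'I_n -> R) d w (a : R) :
  (forall j k, 0 <= A j k) -> (forall j, 0 <= d j) -> 0 <= a ->
  Qf A d (fun j => clamp a (w j)) <= Qf A d w.
Proof.
move=> hA hd ha; rewrite /Qf; apply: lerD.
  apply: ler_wpM2r; first by rewrite invr_ge0.
  apply: ler_sum => j _; apply: ler_sum => k _.
  by apply: ler_wpM2l => //; apply: clamp_lip.
apply: ler_sum => j _; apply: ler_wpM2l => //.
have := clamp_lip a (w j) 0 ha; by rewrite clamp0 // !subr0.
Qed.

Lemma Qstep {R : realType} n (A : 'I_n -> 'I_n -> R) d w (a b : R) :
  (forall j k, 0 <= A j k) -> (forall j, 0 <= d j) -> 0 <= b -> b < a ->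
  (forall j, w j <= b \/ a <= w j) ->
  ((exists a0 b0, [/\ A a0 b0 = 1, A b0 a0 = 1, w a0 <= b & b < w b0]) \/
   (exists b0, d b0 = 1 /\ b < w b0)) ->
  Qf A d (fun j => clamp b (w j)) + (a - b) ^+ 2 <= Qf A d (fun j => clamp a (w j)).
Proof.
move=> hA hd hb hba hgap hcross.
have h0 : 0 <= b \/ a <= 0 by left.
have trow : forall j k, A j k * (clamp b (w j) - clamp b (w k)) ^+ 2 <=
                        A j k * (clamp a (w j) - clamp a (w k)) ^+ 2.
  move=> j k; apply: ler_wpM2l => //.
  by case: (clamp_step hb hba (hgap j) (hgap k)).
have tlead : forall j, d j * (clamp b (w j)) ^+ 2 <= d j * (clamp a (w j)) ^+ 2.
  move=> j; apply: ler_wpM2l => //.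
  case: (clamp_step hb hba (hgap j) h0).
  by rewrite !clamp0 ?subr0 //; lra.
have hrow : forall j, \sum_k A j k * (clamp b (w j) - clamp b (w k)) ^+ 2 <=
                      \sum_k A j k * (clamp a (w j) - clamp a (w k)) ^+ 2.
  by move=> j; apply: ler_sum => k _.
rewrite /Qf.
case: hcross => [[a0 [b0 [h1 h2 h3 h4]]]|[b0 [h1 h2]]].
  have hab : a0 != b0 by apply/eqP => e; subst; lra.
  have e1 := clamp_step hb hba (hgap a0) (hgap b0).
  have e2 := clamp_step hb hba (hgap b0) (hgap a0).
  have key : \sum_j \sum_k A j k * (clamp b (w j) - clamp b (w k)) ^+ 2 + (a - b) ^+ 2
             + (a - b) ^+ 2 <= \sum_j \sum_k A j k * (clamp a (w j) - clamp a (w k)) ^+ 2.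
    apply: sum_bump2 hab hrow _ _.
      apply: (@sum_bump _ _ _ _ b0 _ (trow a0)); rewrite h1 !mul1r.
      case: e1 => _ /(_ h3); apply; case: (hgap b0) => //; lra.
    apply: (@sum_bump _ _ _ _ a0 _ (trow b0)); rewrite h2 !mul1r.
    rewrite (sqrB_sym (clamp b _)) (sqrB_sym (clamp a _)).
    case: e2 => _ _; case: e1 => _ /(_ h3); apply; case: (hgap b0) => //; lra.
  have : \sum_j d j * (clamp b (w j)) ^+ 2 <= \sum_j d j * (clamp a (w j)) ^+ 2.
    by apply: ler_sum => j _.
  lra.
have hh : \sum_j d j * (clamp b (w j)) ^+ 2 + (a - b) ^+ 2 <=
          \sum_j d j * (clamp a (w j)) ^+ 2.
  apply: (@sum_bump _ _ _ _ b0 _ tlead); rewrite h1 !mul1r.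
  case: (clamp_step hb hba h0 (hgap b0)) => _ /(_ hb).
  rewrite !clamp0 ?sub0r ?sqrrN //; last by lra.
  apply; case: (hgap b0) => //; lra.
have : \sum_j \sum_k A j k * (clamp b (w j) - clamp b (w k)) ^+ 2
       <= \sum_j \sum_k A j k * (clamp a (w j) - clamp a (w k)) ^+ 2.
  by apply: ler_sum => j _.
lra.
Qed.

Lemma cs_step {R : realType} (c S T al be : R) : 1 <= c -> 0 <= S -> 0 <= be ->
  be ^+ 2 <= (c - 1) * S -> S + (al - be) ^+ 2 <= T -> al ^+ 2 <= c * T.
Proof.
move=> hc hS hb hbe hT; move: hbe hT.
set k := c - 1; set g := al - be; move=> hbe hT.
have -> : al = be + g by rewrite /g; ring.
have -> : c = k + 1 by rewrite /k; ring.
have hk : 0 <= k by rewrite /k; lra.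
have h1 : (k + 1) * (S + g ^+ 2) <= (k + 1) * T by apply: ler_wpM2l => //; lra.
suff : (be + g) ^+ 2 <= (k + 1) * (S + g ^+ 2) by lra.
case: (ltrP 0 k) => hk0.
  have h2 : 0 <= k * (S + k * g ^+ 2 - 2 * be * g).
    have -> : k * (S + k * g ^+ 2 - 2 * be * g) = (k * S - be ^+ 2) + (be - k * g) ^+ 2
      by ring.
    apply: addr_ge0; [lra | apply: sqr_ge0].
  have h3 : 0 <= S + k * g ^+ 2 - 2 * be * g.
    by rewrite -(pmulr_rge0 _ hk0).
  nra.
have k0 : k = 0 by lra.
rewrite k0 in hbe *.
have b0 : be = 0 by nra.
rewrite b0; nra.
Qed.

Definition Pp {R : realType} {n} (w : 'I_n -> R) (i j : 'I_n) : bool :=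
  (0 < w j) && ((w j < w i) || ((w j == w i) && (j <= i)%N)).
Definition cnt {R : realType} {n} (w : 'I_n -> R) (i : 'I_n) : nat := \sum_j (Pp w i j : nat).

Lemma cnt_ge1 {R : realType} {n} {w : 'I_n -> R} {i} : 0 < w i -> (0 < cnt w i)%N.
Proof. by move=> hi; rewrite /cnt (bigD1 i) //= /Pp hi eqxx leqnn orbT. Qed.

Lemma cnt_lt {R : realType} {n} {w : 'I_n -> R} {i k} : 0 < w i -> w k < w i ->
  (cnt w k < cnt w i)%N.
Proof.
move=> hi hki; rewrite /cnt (bigD1 i) //= [X in (_ < X)%N](bigD1 i) //=.
have -> : Pp w k i = false.
  rewrite /Pp; apply/negbTE; rewrite negb_and negb_or; apply/orP; right.
  apply/andP; split; first by rewrite -leNgt ltW.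
  by rewrite negb_and (gt_eqF hki).
have -> : Pp w i i by rewrite /Pp hi eqxx leqnn orbT.
rewrite add0n add1n ltnS; apply: leq_sum => j _.
case hP: (Pp w k j) => //=.
suff -> : Pp w i j by [].
move: hP; rewrite /Pp => /andP[-> h] /=; apply/orP; left.
case/orP: h => [h|/andP[/eqP -> _]] //; exact: lt_trans hki.
Qed.

Definition Cut {R : realType} {n} (A : 'I_n -> 'I_n -> R) (d : 'I_n -> R) (w : 'I_n -> R) :=
  forall tau, 0 <= tau -> (exists i, tau < w i) ->
  (exists a0 b0, [/\ A a0 b0 = 1, A b0 a0 = 1, w a0 <= tau & tau < w b0]) \/
  (exists b0, d b0 = 1 /\ tau < w b0).

Lemma pos_bound {R : realType} {n} {A : 'I_n -> 'I_n -> R} {d w} :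
  (forall j k, 0 <= A j k) -> (forall j, 0 <= d j) -> Cut A d w ->
  forall i, 0 < w i -> w i ^+ 2 <= (cnt w i)%:R * Qf A d (fun j => clamp (w i) (w j)).
Proof.
move=> hA hd hcut.
suff H : forall m i, (cnt w i <= m)%N -> 0 < w i ->
    w i ^+ 2 <= (cnt w i)%:R * Qf A d (fun j => clamp (w i) (w j)).
  by move=> i; apply: H (leqnn _).
elim=> [|m IH] i hm hi.
  by have := cnt_ge1 hi; rewrite leqNgt in hm; rewrite (negbTE hm).
have hc1 := cnt_ge1 hi.
have hc1R : 1 <= (cnt w i)%:R :> R by rewrite ler1n.
have hQ : forall b, 0 <= Qf A d (fun j => clamp b (w j)) by move=> b; exact: Qf_ge0.
have [be [hb0 hba hgap hbe]] : exists be, [/\ 0 <= be, be < w i,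
    (forall j, w j <= be \/ w i <= w j) &
    be ^+ 2 <= ((cnt w i)%:R - 1) * Qf A d (fun j => clamp be (w j))].
  have hc0 : 0 <= (cnt w i)%:R - 1 :> R by lra.
  case: (boolP [exists k, (0 <= w k) && (w k < w i)]).
    move/existsP => [k0 hk0].
    case: (@arg_maxP _ _ _ k0 (fun k => (0 <= w k) && (w k < w i)) w hk0)
      => k /andP[hk1 hk2] hmax.
    exists (w k); split => //.
      move=> j; case: (lerP (w i) (w j)) => hj; first by right.
      case: (lerP 0 (w j)) => hj0; first by left; apply: hmax; rewrite hj0 hj.
      by left; apply: ltW; exact: lt_le_trans hk1.
    case: (ltrP 0 (w k)) => hk3.
      have hlt := cnt_lt hi hk2.
      have hkm : (cnt w k <= m)%N by rewrite -ltnS; exact: leq_trans hlt hm.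
      have := IH k hkm hk3.
      move=> h; apply: (le_trans h); apply: ler_wpM2r => //.
      move: hlt; rewrite -addn1 -(ler_nat R) natrD => h2; lra.
    have -> : w k = 0 by apply/eqP; rewrite eq_le hk3 hk1.
    by rewrite expr0n /=; apply: mulr_ge0.
  rewrite negb_exists => /forallP hno.
  exists 0; split => //.
    move=> j; case: (lerP (w i) (w j)) => hj; first by right.
    left; have := hno j; rewrite hj andbT -ltNge => h; exact: ltW.
  by rewrite expr0n /=; apply: mulr_ge0.
have hcr := hcut be hb0 (ex_intro _ i hba).
have hst := Qstep n A d w (w i) be hA hd hb0 hba hgap hcr.
apply: cs_step hc1R (hQ be) hb0 hbe hst.
Qed.

Lemma cut_of_eig {R : realType} {n} {A : 'I_n -> 'I_n -> R} {d x} {lam : R} :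
  (forall j k, A j k = A k j) -> (forall j k, A j k = 0 \/ A j k = 1) ->
  (forall j, d j = 0 \/ d j = 1) ->
  (forall j, lam * x j = \sum_k A j k * (x j - x k) + d j * x j) -> lam != 0 ->
  Cut A d x.
Proof.
move=> hs hA01 hd01 heig hl tau ht [i hi].
case: (boolP [exists a0, exists b0, (A a0 b0 == 1) && (x a0 <= tau) && (tau < x b0)]).
  move/existsP=> [a0 /existsP [b0 /andP [/andP [/eqP h1 h2] h3]]].
  by left; exists a0, b0; split=> //; rewrite hs.
case: (boolP [exists b0, (d b0 == 1) && (tau < x b0)]).
  by move/existsP=> [b0 /andP [/eqP h1 h2]]; right; exists b0.
move=> hnd hne; exfalso.
have hno_d : forall j, tau < x j -> d j = 0.
  move=> j hj; case: (hd01 j) => // h.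
  by move: hnd; rewrite negb_exists => /forallP /(_ j); rewrite h eqxx hj.
have hno_A : forall j k, tau < x j -> x k <= tau -> A j k = 0.
  move=> j k hj hk; case: (hA01 j k) => // h.
  move: hne; rewrite negb_exists => /forallP /(_ k); rewrite negb_exists => /forallP /(_ j).
  by rewrite (hs k j) h eqxx hk hj.
set S := \sum_(j | tau < x j) \sum_(k | tau < x k) A j k * (x j - x k).
have e1 : \sum_(j | tau < x j) lam * x j = S.
  apply: eq_bigr => j hj; rewrite heig (hno_d j hj) mul0r addr0.
  rewrite (bigID (fun k => tau < x k)) /=.
  rewrite [X in _ + X]big1 ?addr0 // => k hk.
  by rewrite (hno_A j k hj) ?mul0r // leNgt.
have e2 : S = - S.
  rewrite {1}/S exchange_big /= /S -sumrN; apply: eq_bigr => j _.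
  rewrite -sumrN; apply: eq_bigr => k _; rewrite (hs k j); ring.
have S0 : S = 0 by lra.
have : \sum_(j | tau < x j) x j = 0.
  apply/eqP; move: e1; rewrite S0 -mulr_sumr => /eqP.
  by rewrite mulf_eq0 (negbTE hl).
apply/eqP; rewrite gt_eqF //.
rewrite (bigD1 i) //=; apply: ltr_pwDl; first exact: le_lt_trans hi.
apply: sumr_ge0 => j /andP[hj _]; apply: ltW; exact: le_lt_trans hj.
Qed.

Lemma quad {R : realType} {n} {A : 'I_n -> 'I_n -> R} {d x} {lam : R} :
  (forall j k, A j k = A k j) ->
  (forall j, lam * x j = \sum_k A j k * (x j - x k) + d j * x j) ->
  lam * \sum_j x j ^+ 2 = Qf A d x.
Proof.
move=> hs heig.
have e1 : lam * \sum_j x j ^+ 2 = \sum_j x j * (lam * x j).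
  by rewrite mulr_sumr; apply: eq_bigr => j _; ring.
set X := \sum_j \sum_k A j k * (x j * (x j - x k)).
have e2 : \sum_j \sum_k A j k * (x j - x k) ^+ 2 = X + X.
  have e3 : \sum_j \sum_k A j k * (x k * (x k - x j)) = X.
    by rewrite exchange_big /=; apply: eq_bigr => j _; apply: eq_bigr => k _; rewrite hs.
  rewrite -{2}e3 -big_split /=; apply: eq_bigr => j _.
  rewrite -big_split /=; apply: eq_bigr => k _; ring.
rewrite e1 /Qf e2.
have -> : \sum_j x j * (lam * x j) = X + \sum_j d j * x j ^+ 2.
  rewrite /X -big_split /=; apply: eq_bigr => j _.
  rewrite heig mulrDr mulr_sumr; congr (_ + _); last by ring.
  by apply: eq_bigr => k _; ring.
by field.
Qed.

Lemma count_pairs n (f : 'I_n -> 'I_n -> nat) :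
  (forall i, f i i <= 1)%N -> (forall i j, i != j -> f i j + f j i <= 1)%N ->
  (2 * \sum_i \sum_j f i j <= n * n.+1)%N.
Proof.
move=> h1 h2.
have -> : (2 * \sum_i \sum_j f i j = \sum_i \sum_j (f i j + f j i))%N.
  rewrite mul2n -addnn {2}exchange_big /= -big_split /=.
  by apply: eq_bigr => i _; rewrite -big_split.
have -> : (n * n.+1 = \sum_(i < n) \sum_(j < n) (1 + (i == j)))%N.
  transitivity (\sum_(i < n) n.+1)%N; first by rewrite sum_nat_const card_ord.
  apply: eq_bigr => i _.
  rewrite big_split /= sum1_card card_ord.
  rewrite (bigD1 i) //= eqxx big1 ?addn0 ?addn1 // => j hj.
  by rewrite eq_sym (negbTE hj).
apply: leq_sum => i _; apply: leq_sum => j _.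
case: eqP => [<-|/eqP hij]; last by rewrite addn0; exact: h2.
by rewrite addnn -mul2n; have := h1 i; lia.
Qed.

Lemma Pp_le {R : realType} {n} {w : 'I_n -> R} {i j} : Pp w i j -> 0 < w j /\ w j <= w i.
Proof.
rewrite /Pp => /andP[h1 /orP[h|/andP[/eqP e _]]]; split => //; [exact: ltW | by rewrite e].
Qed.

Lemma Pp_anti {R : realType} {n} {w : 'I_n -> R} {i j} : Pp w i j -> Pp w j i -> i = j.
Proof.
move=> h1 h2; have [_ l1] := Pp_le h1; have [_ l2] := Pp_le h2.
have e : w i = w j by apply/eqP; rewrite eq_le l1 l2.
move: h1 h2; rewrite /Pp e ltxx eqxx /= => /andP[_ h1] /andP[_ h2].
by apply: val_inj; apply/eqP; rewrite eqn_leq h1 h2.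
Qed.

Lemma main_gen {R : realType} n (A : 'I_n -> 'I_n -> R) d x (lam : R) :
  (forall j k, A j k = A k j) -> (forall j k, A j k = 0 \/ A j k = 1) ->
  (forall j, d j = 0 \/ d j = 1) ->
  (forall j, lam * x j = \sum_k A j k * (x j - x k) + d j * x j) -> lam != 0 ->
  (exists j, x j != 0) ->
  2 <= lam * (n * n.+1)%:R.
Proof.
move=> hs hA01 hd01 heig hl [j0 hj0].
have hA0 : forall j k, 0 <= A j k by move=> j k; case: (hA01 j k) => ->.
have hd0 : forall j, 0 <= d j by move=> j; case: (hd01 j) => ->.
have hcut := cut_of_eig hs hA01 hd01 heig hl.
set y := fun j => - x j.
have heig' : forall j, lam * y j = \sum_k A j k * (y j - y k) + d j * y j.
  move=> j; rewrite /y mulrN heig opprD -sumrN; congr (_ + _); last by ring.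
  by apply: eq_bigr => k _; ring.
have hcut' := cut_of_eig hs hA01 hd01 heig' hl.
have hQ : Qf A d y = Qf A d x.
  rewrite -(quad hs heig') -(quad hs heig); congr (_ * _).
  by apply: eq_bigr => j _; rewrite /y sqrrN.
set Qn := Qf A d x.
have hQ0 : 0 <= Qn by apply: Qf_ge0.
have node : forall i, x i ^+ 2 <= ((cnt x i + cnt y i)%N)%:R * Qn.
  move=> i; rewrite natrD mulrDl.
  have c1 : 0 <= (cnt x i)%:R * Qn by apply: mulr_ge0.
  have c2 : 0 <= (cnt y i)%:R * Qn by apply: mulr_ge0.
  case: (ltrgtP 0 (x i)) => hxi.
  - have h := pos_bound hA0 hd0 hcut i hxi.
    have h' : Qf A d (fun j => clamp (x i) (x j)) <= Qn by exact: (Qf_clamp_le n A d x (x i) hA0 hd0 (ltW hxi)).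
    have h'' : (cnt x i)%:R * Qf A d (fun j => clamp (x i) (x j)) <= (cnt x i)%:R * Qn.
      by apply: ler_wpM2l.
    lra.
  - have hyi : 0 < y i by rewrite /y oppr_gt0.
    have h := pos_bound hA0 hd0 hcut' i hyi.
    have h' : Qf A d (fun j => clamp (y i) (y j)) <= Qn.
      rewrite /Qn -hQ; exact: (Qf_clamp_le n A d y (y i) hA0 hd0 (ltW hyi)).
    have h'' : (cnt y i)%:R * Qf A d (fun j => clamp (y i) (y j)) <= (cnt y i)%:R * Qn.
      by apply: ler_wpM2l.
    move: h; rewrite /y sqrrN => h; lra.
  - rewrite -hxi expr0n /=; lra.
have hsum : \sum_i x i ^+ 2 <= (\sum_i (cnt x i + cnt y i))%:R * Qn.
  rewrite natr_sum mulr_suml; apply: ler_sum => i _; exact: node.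
have hcount : (2 * \sum_i (cnt x i + cnt y i) <= n * n.+1)%N.
  have -> : (\sum_i (cnt x i + cnt y i) = \sum_i \sum_j (Pp x i j + Pp y i j))%N.
    by apply: eq_bigr => i _; rewrite /cnt big_split.
  apply: count_pairs.
    move=> i; case E1: (Pp x i i); case E2: (Pp y i i) => //=.
    have [h1 _] := Pp_le E1; have [h2 _] := Pp_le E2.
    move: h2; rewrite /y oppr_gt0 => h2; lra.
  move=> i j hij.
  case E1: (Pp x i j); case E2: (Pp y i j); case E3: (Pp x j i); case E4: (Pp y j i) => //=;
  try (by case/eqP: hij; exact: Pp_anti E1 E3);
  try (by case/eqP: hij; exact: Pp_anti E2 E4);
  exfalso;
  repeat match goal with H : Pp _ _ _ = true |- _ =>
    let a := fresh "a" in let b := fresh "b" in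
    case: (Pp_le H) => /= a b; try (rewrite /y /= in a b); clear H end;
  lra.
have hpos : 0 < \sum_i x i ^+ 2.
  rewrite (bigD1 j0) //=; apply: ltr_pwDl.
    by rewrite lt_def sqr_ge0 expf_eq0 (negbTE hj0) andbF.
  by apply: sumr_ge0 => i _; apply: sqr_ge0.
have hq : Qn = lam * \sum_i x i ^+ 2 by rewrite (quad hs heig).
have hc : 2 * (\sum_i (cnt x i + cnt y i))%:R <= (n * n.+1)%:R :> R.
  by rewrite -[2]/(2%:R) -natrM ler_nat.
set C := (\sum_i (cnt x i + cnt y i))%:R in hsum hc.
set SS := \sum_i x i ^+ 2 in hsum hpos hq.
have h3 : 2 * SS <= (n * n.+1)%:R * Qn.
  have : 2 * (C * Qn) <= (n * n.+1)%:R * Qn by rewrite mulrA; apply: ler_wpM2r.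
  lra.
rewrite hq in h3.
have e : (n * n.+1)%:R * (lam * SS) = lam * (n * n.+1)%:R * SS by ring.
by rewrite -(ler_pM2r hpos) -e.
Qed.

Lemma final_arith {R : realType} (N : nat) (lam : R) : (0 < N)%N ->
  2 <= lam * (N * N.+1)%:R -> 4 / (N%:R * (N%:R ^+ 2 - N%:R + 4)) <= lam.
Proof.
move=> hN h.
rewrite natrM -addn1 natrD in h.
set n := N%:R in h *.
have hn1 : 1 <= n by rewrite /n ler1n.
have hq : (n - 1) * (n - 2) >= 0.
  case: (ltngtP N 1) => hN1.
  - by move: hN1 hN; rewrite ltnS leqn0 => /eqP ->.
  - have : 2 <= n by rewrite /n ler_nat.
    move=> h2; apply: mulr_ge0; lra.
  - by rewrite /n hN1 subrr mul0r.
have hD : 0 < n * (n ^+ 2 - n + 4) by apply: mulr_gt0; nra.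
rewrite ler_pdivrMr //.
have hL : 2 * (n ^+ 2 - n + 4) <= lam * (n * (n + 1)) * (n ^+ 2 - n + 4).
  by apply: ler_wpM2r => //; nra.
have e : lam * (n * (n + 1)) * (n ^+ 2 - n + 4) = (lam * (n * (n ^+ 2 - n + 4))) * (n + 1)
  by ring.
rewrite e in hL.
have h4 : 4 * (n + 1) <= lam * (n * (n ^+ 2 - n + 4)) * (n + 1) by nra.
by rewrite ler_pM2r in h4; lra.
Qed.

Theorem lemma4 (R : realType) (n0 N : nat) (sigma : R -> 'I_n0)
  (E : 'I_n0 -> rel 'I_N.+1)
  (Hpc : piecewise_constant sigma)
  (Hirr : forall p (v : 'I_N.+1), ~~ E p v v)
  (Hundir : forall t : R, 0 <= t -> forall i j : 'I_N,
      E (sigma t) (lift ord0 j) (lift ord0 i) = E (sigma t) (lift ord0 i) (lift ord0 j)) :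
  forall t : R, 0 <= t -> forall lam : R,
    eigenvalue (@Hmx R n0 N E (sigma t)) lam -> lam != 0 ->
    4 / (N%:R * (N%:R ^+ 2 - N%:R + 4)) <= lam.
Proof.
move=> t ht lam /eigenvalueP [v hv hv0] hl.
set p := sigma t.
pose x : 'I_N -> R := fun j => v 0 j.
pose A : 'I_N -> 'I_N -> R := fun j k => adj R E p j k.
pose d : 'I_N -> R := fun j => adj0 R E p j.
have hs : forall j k, A j k = A k j by move=> j k; rewrite /A /adj Hundir.
have hA01 : forall j k, A j k = 0 \/ A j k = 1.
  by move=> j k; rewrite /A /adj; case: (E _ _ _); [right | left].
have hd01 : forall j, d j = 0 \/ d j = 1.
  by move=> j; rewrite /d /adj0; case: (E _ _ _); [right | left].
have hAd : forall j, A j j = 0 by move=> j; rewrite /A /adj (negbTE (Hirr _ _)).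
have heig : forall j, lam * x j = \sum_k A j k * (x j - x k) + d j * x j.
  move=> j.
  have hH : forall i, Hmx R E p i j = (i == j)%:R * (\sum_k A j k + d j) - A j i.
    move=> i; rewrite /Hmx /lapl /Delta !mxE.
    case: eqP => [->|/eqP hij]; first by rewrite hAd mul1r subr0.
    by rewrite mul0r sub0r addr0 hs.
  have e : (v *m Hmx R E p) 0 j = (lam *: v) 0 j by rewrite hv.
  rewrite !mxE in e.
  rewrite /x -e /A /d.
  under eq_bigr => i _ do rewrite hH mulrBr.
  have hdelta : forall c : R, \sum_i v 0 i * ((i == j)%:R * c) = v 0 j * c.
    move=> c; rewrite (bigD1 j) //= eqxx mul1r big1 ?addr0 // => i hij.
    by rewrite (negbTE hij) mul0r mulr0.
  rewrite sumrB hdelta.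
  rewrite mulrDr mulr_sumr addrAC -sumrB; congr (_ + _); last by rewrite mulrC.
  by apply: eq_bigr => k _; rewrite mulrBr; congr (_ - _); [rewrite mulrC | rewrite mulrC].
have [j0 hj0] : exists j, x j != 0.
  case: (boolP [exists j, v 0 j != 0]) => [/existsP//|].
  rewrite negb_exists => /forallP h; case/eqP: hv0; apply/rowP => j.
  by rewrite !mxE; apply/eqP; move: (h j); rewrite negbK.
have := main_gen N A d x lam hs hA01 hd01 heig hl (ex_intro _ j0 hj0).
apply: final_arith.
exact: (leq_ltn_trans (leq0n j0) (ltn_ord j0)).
Qed.
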